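(* Let $T=\{(e_1,f_1),\dots,(e_m,f_m)\}\subset\mathbb{N}^2$ be completely disjointed and negative, with $f_1<\dots<f_m$. For a permutation $\sigma\in S_m$ put $\sigma(T)=\{(e_{\sigma(1)},f_1),\dots,(e_{\sigma(m)},f_m)\}$, and let $\mathcal{T}=\{\sigma(T)\mid\sigma\in S_m,\ \sigma(T)\text{ negative}\}$. Order $\mathcal{T}$ by declaring $\{(a_1,f_1),\dots,(a_m,f_m)\}<\{(b_1,f_1),\dots,(b_m,f_m)\}$ if $a_i>b_i$ for the smallest $i$ with $a_i\ne b_i$, and let $\widetilde{T}$ be the minimal element of $\mathcal{T}$. Then $\widetilde T$ is a negative twisted chain.
   Context: $\mathbb{N}$ = positive integers. A subset of $\mathbb{N}^2$ is negative if each element $(e,f)$ has $e<f$. A subset $\{(e_1,f_1),\dots,(e_m,f_m)\}$ of $\mathbb{N}^2$ is completely disjointed if the $2m$ numbers $e_1,f_1,\dots,e_m,f_m$ are pairwise distinct. For negative points, $(e,f)\prec(g,h)$ means $f<h$ and $e>g$, and $(c,d)\wedge(e,f)=(\max(c,e),\min(d,f))$. A negative twisted chain is a completely disjointed negative subset $T$ of $\mathbb{N}^2$ such that for all distinct $u,v\in T$, either $u\prec v$, or $v\prec u$, or $u\wedge v$ is not negative. *)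

(* Defs.v *)
From mathcomp Require Import all_boot all_fingroup.
Set Implicit Arguments. Unset Strict Implicit. Unset Printing Implicit Defensive.

(* Finite subsets of N^2 are represented by duplicate-free enumerations
   (lists) of their elements; points are pairs (e, f) of naturals. *)

Definition neg_pt (p : nat * nat) : bool := p.1 < p.2.

Definition negative (S : seq (nat * nat)) : bool := all neg_pt S.

Definition completely_disjointed (S : seq (nat * nat)) : bool :=
  uniq (flatten [seq [:: p.1; p.2] | p <- S]).

Definition prec (u v : nat * nat) : bool := (u.2 < v.2) && (v.1 < u.1).

Definition wedge (u v : nat * nat) : nat * nat := (maxn u.1 v.1, minn u.2 v.2).

Definition negative_twisted_chain (S : seq (nat * nat)) : Prop :=
  [/\ completely_disjointed S, negative S &
      forall u v, u \in S -> v \in S -> u <> v ->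
        [|| prec u v, prec v u | ~~ neg_pt (wedge u v)] ].

Definition sigmaT (m : nat) (e f : 'I_m -> nat) (s : 'S_m) : seq (nat * nat) :=
  [seq (e (s i), f i) | i : 'I_m].

Definition tlt (m : nat) (a b : 'I_m -> nat) : Prop :=
  exists i : 'I_m, (forall j : 'I_m, j < i -> a j = b j) /\ b i < a i.

(* Main.v *)
Require Import Defs.
From mathcomp Require Import all_boot all_fingroup.

Lemma flat_perm (T U : eqType) (g h : T -> U) (l : seq T) :
  perm_eq (flatten [seq [:: g x; h x] | x <- l]) (map g l ++ map h l).
Proof.
elim: l => [|x l IH] //=.
rewrite perm_cons perm_sym -[h x :: map h l]cat1s perm_catCA /= perm_cons perm_sym.
exact: IH.
Qed.

Lemma cd_iff (m : nat) (g h : 'I_m -> nat) :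
  completely_disjointed [seq (g i, h i) | i : 'I_m] =
  uniq (map g (enum 'I_m) ++ map h (enum 'I_m)).
Proof.
rewrite /completely_disjointed /image_mem -map_comp.
by apply: perm_uniq; apply: flat_perm.
Qed.

Theorem lemma9p2 (m : nat) (e f : 'I_m -> nat)
  (he_pos : forall i, 0 < e i)
  (hf_incr : forall i j : 'I_m, i < j -> f i < f j)
  (hT_cd : completely_disjointed [seq (e i, f i) | i : 'I_m])
  (hT_neg : negative [seq (e i, f i) | i : 'I_m])
  (s : 'S_m)
  (hs_neg : negative (sigmaT e f s))
  (hs_min : forall t : 'S_m, negative (sigmaT e f t) ->
              (forall i, e (s i) = e (t i)) \/
              tlt (fun i => e (s i)) (fun i => e (t i))) :
  negative_twisted_chain (sigmaT e f s).
Proof.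
have Hps : perm_eq (map s (enum 'I_m)) (enum 'I_m).
  apply: uniq_perm; first by rewrite map_inj_uniq ?enum_uniq //; apply: perm_inj.
    exact: enum_uniq.
  move=> x; rewrite mem_enum; apply/mapP; exists (s^-1%g x); last by rewrite permKV.
  by rewrite mem_enum.
move: (hT_cd); rewrite cd_iff cat_uniq => /and3P [ue _ _].
have einj : injective e by apply/injectiveP.
have negs : forall i, e (s i) < f i.
  move=> i; move/allP: hs_neg => /(_ (e (s i), f i)); apply.
  by apply/mapP; exists i; rewrite ?mem_enum.
have key : forall i j : 'I_m, i < j ->
    [|| prec (e (s i), f i) (e (s j), f j), prec (e (s j), f j) (e (s i), f i)
      | ~~ neg_pt (wedge (e (s i), f i) (e (s j), f j))].
  move=> i j ij.
  have fij := hf_incr _ _ ij.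
  have nij : i != j by rewrite neq_ltn ij.
  have esne : e (s i) != e (s j).
    by apply: contra nij => /eqP /einj /perm_inj ->.
  rewrite /prec /neg_pt /wedge /= fij /=.
  case: (ltngtP (e (s j)) (e (s i))) => [//|lt1|eq1]; last first.
    by move: esne; rewrite eq1 eqxx.
  case: (leqP (f i) (e (s j))) => [le2|lt2].
    rewrite orbC /= -leqNgt geq_min; apply/orP; left.
    by rewrite le2 orbT.
  exfalso.
  pose t := (tperm i j * s)%g.
  have ti : t i = s j by rewrite permM tpermL.
  have tj : t j = s i by rewrite permM tpermR.
  have tk : forall k, k != i -> k != j -> t k = s k.
    by move=> k ki kj; rewrite permM tpermD // eq_sym.
  have negt : negative (sigmaT e f t).
    apply/allP => p /mapP [k _ ->]; rewrite /neg_pt /=.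
    case: (eqVneq k i) => [->|ki]; first by rewrite ti.
    case: (eqVneq k j) => [->|kj]; first by rewrite tj (ltn_trans lt1) // negs.
    by rewrite tk // negs.
  case: (hs_min t negt) => [H|[k [Hk Hlt]]].
    by move: (H i); rewrite ti => /eqP; rewrite (negbTE esne).
  case: (ltngtP k i) => [ki|ik|/val_inj ki].
  - rewrite tk ?ltnn // in Hlt.
      by rewrite neq_ltn ki.
    by rewrite neq_ltn (ltn_trans ki ij).
  - by move: (Hk i ik); rewrite ti => /eqP; rewrite (negbTE esne).
  - by move: Hlt; subst k; rewrite ti ltnNge ltnW.
split.
- rewrite /sigmaT cd_iff; move: hT_cd; rewrite cd_iff; apply: etrans.
  apply: perm_uniq; apply: perm_cat => //.
  rewrite (eq_map (g := e \o s)) // map_comp.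
  exact: perm_map Hps.
- exact: hs_neg.
move=> u v /mapP [i _ ->] /mapP [j _ ->] uv.
case: (ltngtP i j) => [ij|ji|/val_inj ij]; first exact: key.
  have := key _ _ ji; rewrite /wedge maxnC minnC.
  by case/or3P => ->; rewrite ?orbT.
by subst j.
Qed.
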